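(* Let $X$ be a complete CAT(0) space and $f:X\to(-\infty,\infty]$ a convex, proper, lower semicontinuous function attaining its minimum. Let $\psi:[0,\infty)\to[0,\infty)$ be an increasing function vanishing only at $0$, and $(\gamma_n)$ a sequence in $(0,\infty)$ with $\sum_{n=0}^\infty\gamma_n^2=\infty$ having rate of divergence $\theta$. Let $b\in\mathbb{N}$, $p\in Argmin(f)$ and $C$ the closed ball of center $p$ and radius $b$. Suppose $f$ is uniformly convex on $C$ with modulus $\psi$. For $x\in C$ let $x_0:=x$ and $x_{n+1}:=J_{\gamma_n}x_n$. Then $p$ is the unique minimizer of $f$ in $C$ and $(x_n)$ converges strongly to $p$ with rate of convergence $$\Omega_{b,\theta,\psi}(k):=\theta\left(b^2\left(\left\lceil\frac{2b}{2\psi\left(\frac1{k+1}\right)}\right\rceil+1\right)^2\right)+1.$$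
   Context: A geodesic space $(X,d)$ is CAT(0) if for all $z\in X$, all geodesics $\gamma:[a,b]\to X$ and all $t\in[0,1]$, $d^2(z,\gamma((1-t)a+tb))\le(1-t)d^2(z,\gamma(a))+td^2(z,\gamma(b))-t(1-t)d^2(\gamma(a),\gamma(b))$; $(1-t)x+ty$ denotes the point at distance $t\,d(x,y)$ from $x$ on the unique geodesic from $x$ to $y$. $Argmin(f)$ is the set of minimizers of $f$. $J_\gamma(x):=\arg\min_{y\in X}\left[f(y)+\frac1{2\gamma}d^2(x,y)\right]$ (exists uniquely). $f$ is uniformly convex on $C$ with modulus $\psi$ if for all $x,y\in C$, $t\in[0,1]$: $f((1-t)x+ty)\le(1-t)f(x)+tf(y)-t(1-t)\psi(d(x,y))$. A rate of divergence for $\sum\gamma_n^2=\infty$ is $\theta:\mathbb{N}\to\mathbb{N}$ with $\sum_{n=0}^{\theta(K)}\gamma_n^2\ge K$ for all $K$. A rate of convergence of $a_n\to a$ is $\Phi$ with $d(a_n,a)\le\frac1{k+1}$ for all $k$ and $n\ge\Phi(k)$. *)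

(* Defs.v *)
From Stdlib Require Import Reals Lra ZArith.
From Coquelicot Require Import Coquelicot.
Open Scope R_scope.

Definition is_metric {X : Type} (d : X -> X -> R) : Prop :=
  (forall x y, 0 <= d x y) /\ (forall x y, d x y = 0 <-> x = y) /\
  (forall x y, d x y = d y x) /\ (forall x y z, d x z <= d x y + d y z).

Definition converges {X : Type} (d : X -> X -> R) (u : nat -> X) (l : X) : Prop :=
  forall eps, 0 < eps -> exists N, forall n, (N <= n)%nat -> d (u n) l < eps.

Definition cauchy {X : Type} (d : X -> X -> R) (u : nat -> X) : Prop :=
  forall eps, 0 < eps -> exists N, forall m n, (N <= m)%nat -> (N <= n)%nat ->
    d (u m) (u n) < eps.

Definition complete {X : Type} (d : X -> X -> R) : Prop :=
  forall u, cauchy d u -> exists l, converges d u l.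

Definition geodesic {X : Type} (d : X -> X -> R) (g : R -> X) (a b : R) : Prop :=
  a <= b /\ forall s t, a <= s <= b -> a <= t <= b -> d (g s) (g t) = Rabs (s - t).

Definition geodesic_space {X : Type} (d : X -> X -> R) : Prop :=
  forall x y, exists g, geodesic d g 0 (d x y) /\ g 0 = x /\ g (d x y) = y.

Definition CAT0 {X : Type} (d : X -> X -> R) : Prop :=
  is_metric d /\ geodesic_space d /\
  forall z (g : R -> X) a b t, geodesic d g a b -> 0 <= t <= 1 ->
    (d z (g ((1 - t) * a + t * b)))^2 <=
      (1 - t) * (d z (g a))^2 + t * (d z (g b))^2 - t * (1 - t) * (d (g a) (g b))^2.

(* z = (1-t)x + ty : the point at distance t d(x,y) from x on the (unique)
   geodesic from x to y *)
Definition cc {X : Type} (d : X -> X -> R) (x y : X) (t : R) (z : X) : Prop :=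
  exists g, geodesic d g 0 (d x y) /\ g 0 = x /\ g (d x y) = y /\ z = g (t * d x y).

(* f : X -> (-oo, +oo] *)
Definition no_minfty {X : Type} (f : X -> Rbar) : Prop := forall x, f x <> m_infty.

Definition proper_fun {X : Type} (f : X -> Rbar) : Prop :=
  no_minfty f /\ exists x, f x <> p_infty.

Definition convex_fun {X : Type} (d : X -> X -> R) (f : X -> Rbar) : Prop :=
  forall x y t z, 0 <= t <= 1 -> cc d x y t z ->
    Rbar_le (f z) (Rbar_plus (Rbar_mult (1 - t) (f x)) (Rbar_mult t (f y))).

Definition lsc {X : Type} (d : X -> X -> R) (f : X -> Rbar) : Prop :=
  forall (a : R) (u : nat -> X) x, (forall n, Rbar_le (f (u n)) a) ->
    converges d u x -> Rbar_le (f x) a.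

Definition is_argmin {X : Type} (f : X -> Rbar) (p : X) : Prop :=
  forall z, Rbar_le (f p) (f z).

Definition uniformly_convex_on {X : Type} (d : X -> X -> R) (f : X -> Rbar)
    (C : X -> Prop) (psi : R -> R) : Prop :=
  forall x y t z, C x -> C y -> 0 <= t <= 1 -> cc d x y t z ->
    Rbar_le (f z)
      (Rbar_minus (Rbar_plus (Rbar_mult (1 - t) (f x)) (Rbar_mult t (f y)))
                  (t * (1 - t) * psi (d x y))).

(* y = J_gam(x) : y minimizes  f(.) + d^2(x,.)/(2 gam) *)
Definition is_resolvent {X : Type} (d : X -> X -> R) (f : X -> Rbar) (gam : R)
    (x y : X) : Prop :=
  is_argmin (fun w => Rbar_plus (f w) (Finite ((d x w)^2 / (2 * gam)))) y.

Definition rate_of_divergence (gam : nat -> R) (theta : nat -> nat) : Prop :=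
  forall K : nat, sum_f_R0 (fun n => (gam n)^2) (theta K) >= INR K.

(* ceiling of a real, as a natural number (for nonnegative arguments) *)
Definition ceil_nat (r : R) : nat := Z.to_nat (- Int_part (- r)).

Definition Omega (b : nat) (theta : nat -> nat) (psi : R -> R) (k : nat) : nat :=
  let c : nat := ceil_nat ((2 * INR b) / (2 * psi (1 / (INR k + 1)))) in
  (theta (b ^ 2 * (c + 1) ^ 2) + 1)%nat.

(* Main.v *)
Require Import Defs.
From Stdlib Require Import Reals Lra Lia Psatz ZArith.
From Coquelicot Require Import Coquelicot.
Open Scope R_scope.

Lemma lim_lem (A B : R) : 0 <= A -> (forall t, 0 < t <= 1 -> (1 - t) * A <= B) -> A <= B.
Proof.
  intros HA H. destruct (Rle_dec A B) as [h|h]; [exact h|].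
  exfalso. assert (HB : 0 <= B) by (specialize (H 1); lra).
  assert (HA' : 0 < A) by lra.
  set (t := (A - B) / (2 * A)).
  assert (Ht1 : 0 < t). { unfold t. apply Rdiv_lt_0_compat; lra. }
  assert (Ht2 : t * (2 * A) = A - B). { unfold t. field. lra. }
  specialize (H t). assert (t <= 1) by nra. specialize (H (conj Ht1 H0)). nra.
Qed.

Lemma core (X : Type) (d : X -> X -> R) (f : X -> Rbar) (x y p : X) gam fy fp phi :
  CAT0 d -> no_minfty f -> 0 < gam -> is_resolvent d f gam x y ->
  f y = Finite fy -> f p = Finite fp -> fp <= fy -> 0 <= phi ->
  (forall t w, 0 < t <= 1 -> cc d y p t w ->
     Rbar_le (f w) (Finite ((1-t)*fy + t*fp - t*(1-t)*phi))) ->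
  phi + (d y p)^2/(2*gam) <= ((d x p)^2 - (d x y)^2)/(2*gam).
Proof.
  intros [Hm [Hg Hc]] Hnm Hgam Hres Hy Hp Hyp Hphi Hf.
  apply lim_lem.
  { apply Rplus_le_le_0_compat; [lra|]. apply Rmult_le_pos.
    apply pow2_ge_0. left. apply Rinv_0_lt_compat. lra. }
  intros t Ht.
  destruct (Hg y p) as [g [Hgeo [Hg0 HgD]]].
  set (D := d y p) in *.
  set (w := g (t * D)).
  assert (Hcc : cc d y p t w) by (exists g; repeat split; auto; apply Hgeo).
  specialize (Hf t w Ht Hcc).
  unfold is_resolvent, is_argmin in Hres. specialize (Hres w). simpl in Hres. rewrite Hy in Hres.
  specialize (Hc x g 0 D t Hgeo ltac:(lra)).
  replace ((1 - t) * 0 + t * D) with (t * D) in Hc by ring.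
  rewrite Hg0, HgD in Hc. fold w in Hc. fold D in Hc.
  destruct (f w) as [fw| |] eqn:Ew.
  2: { simpl in Hf. contradiction. }
  2: { exfalso; exact (Hnm w Ew). }
  simpl in Hf, Hres.
  set (u := / (2 * gam)).
  assert (Hu : 0 < u) by (apply Rinv_0_lt_compat; lra).
  unfold Rdiv in *. fold u in Hres |- *.
  assert (H2 := Rmult_le_compat_l u _ _ (Rlt_le _ _ Hu) Hc).
  assert (key : t * ((1 - t) * (phi + D ^ 2 * u) - (d x p ^ 2 - d x y ^ 2) * u) <= 0).
  { assert (t * (fy - fp) >= 0) by nra. nra. }
  nra.
Qed.

Lemma fin_p (X : Type) (f : X -> Rbar) p :
  proper_fun f -> is_argmin f p -> exists fp, f p = Finite fp.
Proof.
  intros [Hn [x0 Hx0]] Ha. specialize (Ha x0).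
  destruct (f p) as [fp| |] eqn:E;
  [ exists fp; reflexivity | exfalso .. ];
  [ destruct (f x0) eqn:E2; simpl in Ha; try contradiction; apply Hx0; reflexivity
  | exact (Hn p E) ].
Qed.

Lemma fin_y (X : Type) (d : X -> X -> R) (f : X -> Rbar) gam x y p fp :
  no_minfty f -> is_resolvent d f gam x y -> f p = Finite fp ->
  exists fy, f y = Finite fy.
Proof.
  intros Hn Hr Hp. unfold is_resolvent, is_argmin in Hr. specialize (Hr p).
  rewrite Hp in Hr.
  destruct (f y) as [fy| |] eqn:E.
  - exists fy; reflexivity.
  - simpl in Hr. contradiction.
  - exfalso; exact (Hn y E).
Qed.

Lemma fejer (X : Type) (d : X -> X -> R) (f : X -> Rbar) gam x y p :
  CAT0 d -> convex_fun d f -> proper_fun f -> is_argmin f p -> 0 < gam ->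
  is_resolvent d f gam x y -> (d y p)^2 <= (d x p)^2 - (d x y)^2.
Proof.
  intros Hc Hcv Hpr Ha Hg Hr.
  destruct (fin_p X f p Hpr Ha) as [fp Hp].
  destruct (fin_y X d f gam x y p fp (proj1 Hpr) Hr Hp) as [fy Hy].
  assert (Hyp : fp <= fy) by (specialize (Ha y); rewrite Hp, Hy in Ha; exact Ha).
  assert (H := core X d f x y p gam fy fp 0 Hc (proj1 Hpr) Hg Hr Hy Hp Hyp (Rle_refl 0)).
  assert (H' : (d y p)^2/(2*gam) <= ((d x p)^2 - (d x y)^2)/(2*gam)).
  { replace ((d y p)^2/(2*gam)) with (0 + (d y p)^2/(2*gam)) by ring. apply H.
    intros t w Ht Hw. specialize (Hcv y p t w ltac:(lra) Hw). rewrite Hy, Hp in Hcv.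
    simpl in Hcv. replace ((1 - t) * fy + t * fp - t * (1 - t) * 0) with ((1 - t) * fy + t * fp) by ring.
    exact Hcv. }
  unfold Rdiv in H'. apply Rmult_le_reg_r with (/ (2*gam)).
  apply Rinv_0_lt_compat; lra. exact H'.
Qed.

Lemma slope (X : Type) (d : X -> X -> R) (f : X -> Rbar) (psi : R -> R) (b : R) gam x y p :
  CAT0 d -> convex_fun d f -> proper_fun f -> is_argmin f p -> 0 < gam ->
  (forall t, 0 <= t -> 0 <= psi t) ->
  uniformly_convex_on d f (fun y => d p y <= b) psi ->
  d p y <= b -> 0 <= b ->
  is_resolvent d f gam x y -> psi (d y p) <= d x y * d y p / gam.
Proof.
  intros Hc Hcv Hpr Ha Hg Hpsi Hu Hyb Hb Hr.
  assert (Hm := proj1 Hc). destruct Hm as [Hnn [H0 [Hs Ht]]].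
  destruct (fin_p X f p Hpr Ha) as [fp Hp].
  destruct (fin_y X d f gam x y p fp (proj1 Hpr) Hr Hp) as [fy Hy].
  assert (Hyp : fp <= fy) by (specialize (Ha y); rewrite Hp, Hy in Ha; exact Ha).
  assert (Hps : 0 <= psi (d y p)) by (apply Hpsi; apply Hnn).
  assert (H := core X d f x y p gam fy fp (psi (d y p)) Hc (proj1 Hpr) Hg Hr Hy Hp Hyp Hps).
  assert (H' : psi (d y p) + (d y p)^2/(2*gam) <= ((d x p)^2 - (d x y)^2)/(2*gam)).
  { apply H.
    intros t w Ht' Hw.
    assert (Hpp : d p p <= b) by (rewrite (proj2 (H0 p p) eq_refl); lra).
    specialize (Hu y p t w Hyb Hpp ltac:(lra) Hw). rewrite Hy, Hp in Hu.
    simpl in Hu. replace ((1 - t) * fy + t * fp - t * (1 - t) * psi (d y p))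
      with ((1 - t) * fy + t * fp + - (t * (1 - t) * psi (d y p))) by ring.
    exact Hu. }
  assert (Htr := Ht x y p).
  assert (h1 := Hnn x y). assert (h2 := Hnn y p). assert (h3 := Hnn x p).
  assert (Hsq : (d x p)^2 - (d x y)^2 - (d y p)^2 <= 2 * (d x y * d y p)) by nra.
  unfold Rdiv in *. set (u := / (2 * gam)) in *.
  assert (Hu' : 0 < u) by (apply Rinv_0_lt_compat; lra).
  assert (psi (d y p) <= 2 * (d x y * d y p) * u) by nra.
  replace (/ gam) with (2 * u). lra. unfold u. field. lra.
Qed.

Lemma ceil_ge r : 0 <= r -> r <= INR (ceil_nat r).
Proof.
  intros Hr. unfold ceil_nat. destruct (base_Int_part (- r)) as [H1 H2].
  assert (Hz : (0 <= - Int_part (- r))%Z).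
  { apply le_IZR. rewrite opp_IZR. simpl. lra. }
  rewrite INR_IZR_INZ, Z2Nat.id by exact Hz. rewrite opp_IZR. lra.
Qed.

Lemma exists_or (a g : nat -> R) N : (forall m, 0 <= g m) ->
  (exists m, (m <= N)%nat /\ a m <= g m) \/
  sum_f_R0 (fun m => g m ^ 2) N < sum_f_R0 (fun m => a m ^ 2) N.
Proof.
  intros Hg. induction N as [|N IH].
  - destruct (Rle_dec (a 0%nat) (g 0%nat)) as [h|h].
    + left. exists 0%nat. split; [lia|exact h].
    + right. cbn [sum_f_R0]. specialize (Hg 0%nat). nra.
  - destruct IH as [[m [Hm Ha]]|IH].
    + left. exists m. split; [lia|exact Ha].
    + destruct (Rle_dec (a (S N)) (g (S N))) as [h|h].
      * left. exists (S N). split; [lia|exact h].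
      * right. cbn [sum_f_R0]. specialize (Hg (S N)).
        assert (g (S N) ^ 2 < a (S N) ^ 2) by nra. lra.
Qed.

Lemma sum_scal (a : nat -> R) c N :
  sum_f_R0 (fun m => (c * a m) ^ 2) N = c ^ 2 * sum_f_R0 (fun m => a m ^ 2) N.
Proof. induction N as [|N IH]; cbn [sum_f_R0]; [ring|]. rewrite IH. ring. Qed.

Theorem proposition5p4 (X : Type) (d : X -> X -> R) (f : X -> Rbar)
  (psi : R -> R) (gam : nat -> R) (theta : nat -> nat) (b : nat) (p : X)
  (xs : nat -> X) :
  CAT0 d -> complete d ->
  convex_fun d f -> proper_fun f -> lsc d f ->
  (forall s t, 0 <= s -> s <= t -> psi s <= psi t) ->
  (forall t, 0 <= t -> 0 <= psi t) ->
  (forall t, 0 <= t -> (psi t = 0 <-> t = 0)) ->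
  (forall n, 0 < gam n) ->
  rate_of_divergence gam theta ->
  is_argmin f p ->
  uniformly_convex_on d f (fun y => d p y <= INR b) psi ->
  d p (xs 0%nat) <= INR b ->
  (forall n, is_resolvent d f (gam n) (xs n) (xs (S n))) ->
  (forall q, d p q <= INR b ->
     (forall z, d p z <= INR b -> Rbar_le (f q) (f z)) -> q = p) /\
  (forall k n, (Omega b theta psi k <= n)%nat -> d (xs n) p <= 1 / (INR k + 1)).
Proof.
  intros Hc Hcomp Hcv Hpr Hlsc Hmon Hpsi0 Hpsi Hgam Hrate Ha Hu Hx0 Hres.
  assert (Hm := proj1 Hc). destruct Hm as [Hnn [H0 [Hs Ht]]].
  assert (Hb : 0 <= INR b) by apply pos_INR.
  destruct (fin_p X f p Hpr Ha) as [fp Hp].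
  split.
  - intros q Hq Hmin.
    assert (Hpp : d p p <= INR b) by (rewrite (proj2 (H0 p p) eq_refl); lra).
    assert (Hqp := Hmin p Hpp). rewrite Hp in Hqp.
    assert (Hpq := Ha q). rewrite Hp in Hpq.
    destruct (f q) as [fq| |] eqn:Eq; simpl in Hqp, Hpq; try contradiction.
    destruct (proj1 (proj2 Hc) p q) as [g [Hgeo [Hg0 HgD]]].
    set (D := d p q) in *.
    set (z := g (/2 * D)).
    assert (Hcc : cc d p q (/2) z) by (exists g; repeat split; auto; apply Hgeo).
    assert (HD : 0 <= D) by apply Hnn.
    assert (Hz : d p z <= INR b).
    { unfold z. rewrite <- Hg0 at 1. rewrite (proj2 Hgeo 0 (/2 * D)) by lra.
      rewrite Rabs_left1 by lra. lra. }
    specialize (Hu p q (/2) z Hpp Hq ltac:(lra) Hcc). rewrite Hp, Eq in Hu. simpl in Hu.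
    assert (Hpz := Ha z). rewrite Hp in Hpz.
    destruct (f z) as [fz| |] eqn:Ez; simpl in Hu, Hpz; try contradiction.
    fold D in Hu. assert (psi D <= 0) by lra.
    assert (psi D = 0) by (specialize (Hpsi0 D HD); lra).
    assert (D = 0) by (apply (Hpsi D HD); assumption).
    symmetry. apply (proj1 (H0 p q)). assumption.
  - set (Dn := fun n => d (xs n) p).
    set (dn := fun n => d (xs n) (xs (S n))).
    assert (Hfej : forall n, Dn (S n) ^ 2 <= Dn n ^ 2 - dn n ^ 2).
    { intro n. unfold Dn, dn. apply (fejer X d f (gam n)); auto. }
    assert (HDnn : forall n, 0 <= Dn n) by (intro; apply Hnn).
    assert (Hdnn : forall n, 0 <= dn n) by (intro; apply Hnn).
    assert (Hdec : forall n, Dn (S n) <= Dn n).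
    { intro n. specialize (Hfej n).
      assert (h := HDnn (S n)). assert (h' := HDnn n). assert (h'' := Hdnn n). nra. }
    assert (Hdec' : forall m n, (m <= n)%nat -> Dn n <= Dn m).
    { intros m n Hmn. induction Hmn; [lra|]. specialize (Hdec m0). lra. }
    assert (HD0 : Dn 0%nat <= INR b) by (unfold Dn; rewrite Hs; exact Hx0).
    assert (HC : forall n, d p (xs n) <= INR b).
    { intro n. rewrite Hs. fold (Dn n). specialize (Hdec' 0%nat n ltac:(lia)). lra. }
    assert (Hsum : forall N, sum_f_R0 (fun m => dn m ^ 2) N <= Dn 0%nat ^ 2 - Dn (S N) ^ 2).
    { induction N as [|N IH]; cbn [sum_f_R0].
      - specialize (Hfej 0%nat). lra.
      - specialize (Hfej (S N)). lra. }
    assert (Hsum' : forall N, sum_f_R0 (fun m => dn m ^ 2) N <= INR b ^ 2).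
    { intro N. specialize (Hsum N). assert (h := HDnn 0%nat). nra. }
    intros k n Hn. unfold Omega in Hn. cbv zeta in Hn.
    set (eps := 1 / (INR k + 1)) in *.
    assert (Heps : 0 < eps).
    { unfold eps. apply Rdiv_lt_0_compat; [lra|]. assert (h := pos_INR k). lra. }
    set (pe := psi eps) in *.
    assert (Hpe : 0 < pe).
    { assert (h := Hpsi0 eps ltac:(lra)). destruct h as [h|h]; [exact h|].
      exfalso. symmetry in h; apply (proj1 (Hpsi eps ltac:(lra))) in h. lra. }
    set (c := ceil_nat (2 * INR b / (2 * pe))) in *.
    assert (Hcge : INR b <= INR c * pe).
    { assert (h := ceil_ge (2 * INR b / (2 * pe))).
      assert (h' : 0 <= 2 * INR b / (2 * pe)) by (apply Rdiv_le_0_compat; lra).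
      specialize (h h'). fold c in h.
      replace (INR b) with (2 * INR b / (2 * pe) * pe) by (field; lra).
      apply Rmult_le_compat_r; lra. }
    set (N := theta (b ^ 2 * (c + 1) ^ 2)%nat) in *.
    assert (HK := Hrate (b ^ 2 * (c + 1) ^ 2)%nat). fold N in HK.
    rewrite mult_INR, !pow_INR, plus_INR in HK. simpl INR at 3 in HK.
    assert (hc := pos_INR c).
    destruct (exists_or (fun m => (INR c + 1) * dn m) gam N (fun m => Rlt_le _ _ (Hgam m)))
      as [[m [HmN Hm]]|Hcon].
    + assert (Hsl := slope X d f psi (INR b) (gam m) (xs m) (xs (S m)) p Hc Hcv Hpr Ha
                 (Hgam m) Hpsi0 Hu (HC (S m)) Hb (Hres m)).
      fold (Dn (S m)) in Hsl. fold (dn m) in Hsl.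
      assert (HDb : Dn (S m) <= INR b) by (unfold Dn; rewrite Hs; apply HC).
      assert (Hgm := Hgam m).
      assert (Hlt : psi (Dn (S m)) < pe).
      { apply Rmult_lt_reg_r with (gam m * (INR c + 1)); [nra|].
        assert (h1 : psi (Dn (S m)) * gam m <= dn m * Dn (S m)).
        { unfold Rdiv in Hsl. apply Rmult_le_reg_r with (/ gam m).
          apply Rinv_0_lt_compat; lra.
          replace (psi (Dn (S m)) * gam m * / gam m) with (psi (Dn (S m))) by (field; lra).
          exact Hsl. }
        assert (h2 : dn m * Dn (S m) <= dn m * INR b)
          by (apply Rmult_le_compat_l; [apply Hdnn|exact HDb]).
        assert (h3 : (INR c + 1) * dn m * INR b <= gam m * INR b)
          by (apply Rmult_le_compat_r; lra).
        assert (h4 : gam m * INR b <= gam m * (INR c * pe))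
          by (apply Rmult_le_compat_l; lra).
        nra. }
      assert (HSm : Dn (S m) < eps).
      { destruct (Rlt_le_dec (Dn (S m)) eps) as [h|h]; [exact h|].
        exfalso. assert (h' := Hmon eps (Dn (S m)) ltac:(lra) h). fold pe in h'. lra. }
      assert (Hmn : (S m <= n)%nat) by lia.
      specialize (Hdec' (S m) n Hmn). unfold Dn in Hdec', HSm. lra.
    + exfalso. rewrite sum_scal in Hcon. specialize (Hsum' N).
      assert (0 <= (INR c + 1) ^ 2) by nra.
      assert ((INR c + 1) ^ 2 * sum_f_R0 (fun m => dn m ^ 2) N <= (INR c + 1) ^ 2 * INR b ^ 2)
        by (apply Rmult_le_compat_l; lra).
      lra.
Qed.
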